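(* For any two information trees $\mathcal T,\mathcal T'$ on $\mathcal I$: (i) $\mathcal T\succeq_{dif}\mathcal T'$ if and only if $\mathcal T\succeq_{FO}\mathcal T'$; (ii) $\mathcal T\succeq_{FO}\mathcal T'$ if and only if $\mathcal T'\succeq_{SO}\mathcal T$.
   Context: Model. Fix an integer $I\ge2$, agents $\mathcal I=\{1,\dots,I\}$, a prior $\rho\in(0,1)$ and a loss probability $\varepsilon\in(0,1)$. A state of nature $\theta\in\{g,b\}$ has $\Pr(\theta=g)=\rho$. A forest $F$ on $\mathcal I$ is a collection of vertex-disjoint undirected trees $T^1,\dots,T^R$ whose vertex sets partition $\mathcal I$; a seeding $s=(s^1,\dots,s^R)$ chooses exactly one vertex $s^r$ of each $T^r$. The pair $\mathcal T=(F,s)$ is an information tree: orient each $T^r$ away from $s^r$ and add a root $0$ (the planner) with an arc $0\to s^r$ for each $r$. If $\theta=b$ no messages are sent. If $\theta=g$ the planner sends a message along each arc $0\to s^r$, and every agent who receives a message forwards it along every arc leaving her. Each transmission along an arc is lost independently with probability $\varepsilon$. Agent $i$ observes only $x_i\in\{y,n\}$. $\Omega=\{g,b\}\times\{y,n\}^I$, $\mathbb P_{\mathcal T}$ the induced probability. $G=\{\theta=g\}$, $Y_i=\{x_i=y\}$, $N_i=\Omega\setminus Y_i$, $Y^*=\bigcap_iY_i$. Orders: let $d(i)$ (resp. $d'(i)$) be the number of arcs on the path from $0$ to $i$ in $\mathcal T$ (resp. $\mathcal T'$). $\mathcal T\succeq_{dif}\mathcal T'$ if there is a permutation $\pi$ of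 $\mathcal I$ with $d(i)\le d'(\pi(i))$ for all $i$. $\mathcal T\succeq_{FO}\mathcal T'$ if there is a permutation $\pi$ such that for every $i$ the binary experiment ''signal $x_i$ about the event $G$ vs. $\Omega\setminus G$'' under $\mathbb P_{\mathcal T}$ is Blackwell (weakly) more informative than the experiment ''signal $x_{\pi(i)}$ about $G$ vs. $\Omega\setminus G$'' under $\mathbb P_{\mathcal T'}$. $\mathcal T\succeq_{SO}\mathcal T'$ is defined in the same way with the event $Y^*$ in place of $G$. *)

(* Defs.v *)
From HB Require Import structures.
From mathcomp Require Import all_boot all_order all_algebra all_fingroup.
From mathcomp Require Import reals.
Set Implicit Arguments. Unset Strict Implicit. Unset Printing Implicit Defensive.
Import Order.TTheory GRing.Theory Num.Theory.
Local Open Scope ring_scope.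

(* A forest with a seeding, oriented away from the seeds and with the  *)
(* planner 0 attached to every seed, is exactly a rooted tree on       *)
(* {0} + agents; we represent it by the parent map of the agents:      *)
(* par i = None means the arc 0 -> i (i is a seed), par i = Some j     *)
(* means the arc j -> i.  Acyclicity: following parents from any agent *)
(* reaches the planner within n steps.                                 *)
Record info_tree (n : nat) := InfoTree {
  par : 'I_n -> option 'I_n;
  par_acyclic : forall i : 'I_n, iter n (obind par) (Some i) = None
}.

(* number of arcs on the path from 0 to i (fuel-based; fuel n suffices) *)
Fixpoint depth_fuel n (T : info_tree n) (k : nat) (i : 'I_n) : nat :=
  match k with
  | 0 => 0
  | k'.+1 => match par T i with
             | None => 1
             | Some j => (depth_fuel T k' j).+1
             end
  end.

Definition depth n (T : info_tree n) (i : 'I_n) : nat := depth_fuel T n i.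

(* Given the outcome a of all transmissions (a i = true iff the arc into
   agent i was NOT lost), does agent i receive the message? *)
Fixpoint reach_fuel n (T : info_tree n) (a : {ffun 'I_n -> bool})
   (k : nat) (i : 'I_n) : bool :=
  match k with
  | 0 => false
  | k'.+1 => a i && match par T i with
                    | None => true
                    | Some j => reach_fuel T a k' j
                    end
  end.

Definition reach n (T : info_tree n) (a : {ffun 'I_n -> bool}) (i : 'I_n) :=
  reach_fuel T a n i.

(* Sample space Omega = {g,b} x {y,n}^n : theta = true means g,
   x i = true means x_i = y. *)
Definition Omega (n : nat) : finType := (bool * {ffun 'I_n -> bool})%type.

Section Prob.
Variable R : realType.

Definition probT n (rho eps : R) (T : info_tree n) (w : Omega n) : R :=
  if w.1 then
    rho * \sum_(a : {ffun 'I_n -> bool})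
            ((\prod_(i : 'I_n) (if a i then 1 - eps else eps)) *
             (if [forall i, w.2 i == reach T a i] then 1 else 0))
  else (1 - rho) * (if [forall i, ~~ w.2 i] then 1 else 0).

Definition PrT n rho eps (T : info_tree n) (E : pred (Omega n)) : R :=
  \sum_(w | E w) probT rho eps T w.

Definition condPrT n rho eps (T : info_tree n) (A E : pred (Omega n)) : R :=
  PrT rho eps T (predI A E) / PrT rho eps T E.

Definition evG n : pred (Omega n) := fun w => w.1.
Definition evYstar n : pred (Omega n) := fun w => [forall i, w.2 i].
Definition evSig n (i : 'I_n) (s : bool) : pred (Omega n) :=
  fun w => w.2 i == s.

(* A binary experiment with signal space {y,n} (= bool): the distribution
   of the signal in each of the two states. *)
Definition blackwell_ge (p1 q1 p2 q2 : bool -> R) : Prop :=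
  exists M : bool -> bool -> R,
    [/\ forall s t, 0 <= M s t,
        forall s, \sum_(t : bool) M s t = 1,
        forall t, p2 t = \sum_(s : bool) p1 s * M s t
      & forall t, q2 t = \sum_(s : bool) q1 s * M s t].

Definition experiment n rho eps (T : info_tree n) (E : pred (Omega n))
    (i : 'I_n) : (bool -> R) * (bool -> R) :=
  (fun s => condPrT rho eps T (evSig i s) E,
   fun s => condPrT rho eps T (evSig i s) (predC E)).

Definition ge_event n rho eps (E : pred (Omega n)) (T T' : info_tree n) : Prop :=
  exists pi : {perm 'I_n}, forall i : 'I_n,
    blackwell_ge (experiment rho eps T E i).1 (experiment rho eps T E i).2
                 (experiment rho eps T' E (pi i)).1
                 (experiment rho eps T' E (pi i)).2.

Definition ge_FO n rho eps (T T' : info_tree n) := ge_event rho eps (@evG n) T T'.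
Definition ge_SO n rho eps (T T' : info_tree n) := ge_event rho eps (@evYstar n) T T'.

End Prob.

Definition ge_dif n (T T' : info_tree n) : Prop :=
  exists pi : {perm 'I_n}, forall i : 'I_n, (depth T i <= depth T' (pi i))%N.

(* Main.v *)
Require Import Defs.
From mathcomp Require Import all_boot all_order all_algebra all_fingroup.
From mathcomp Require Import reals.
From mathcomp Require Import ring lra.
Import Order.TTheory GRing.Theory Num.Theory.
Local Open Scope ring_scope.

Module Aux.
Set Implicit Arguments. Unset Strict Implicit.

Section Comb.
Variables (n : nat) (T : info_tree n).

Fixpoint chain k (i : 'I_n) : seq 'I_n :=
  match k with 0 => [::] | k'.+1 => i :: match par T i with None => [::] | Some j => chain k' j end end.
Fixpoint term k (i : 'I_n) : bool :=
  match k with 0 => false | k'.+1 => match par T i with None => true | Some j => term k' j end end.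

Lemma depth_chain k i : depth_fuel T k i = size (chain k i).
Proof. elim: k i => [|k IH] i //=; case: (par T i) => [j|] //=; by rewrite IH. Qed.

Lemma reach_chain a k i : reach_fuel T a k i = all a (chain k i) && term k i.
Proof.
elim: k i => [|k IH] i /=; first by [].
case: (par T i) => [j|] /=; first by rewrite IH andbA.
by rewrite !andbT.
Qed.

Lemma iter_none k : iter k (obind (par T)) None = None.
Proof. by elim: k => //= k ->. Qed.

Lemma term_iter k i : term k i = (iter k (obind (par T)) (Some i) == None).
Proof.
elim: k i => [|k IH] i //.
rewrite iterSr [term _ _]/= [obind _ _]/=; case: (par T i) => [j|] /=; first exact: IH.
by rewrite iter_none.
Qed.

Lemma term_n i : term n i.
Proof. by rewrite term_iter par_acyclic. Qed.

Lemma mem_chain k i x : x \in chain k i -> exists m, iter m (obind (par T)) (Some i) = Some x.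
Proof.
elim: k i => [|k IH] i //=; rewrite inE => /orP [/eqP -> | ]; first by exists 0%N.
case E: (par T i) => [j|] //= /IH [m Hm]; exists m.+1; by rewrite iterSr /= E.
Qed.

Lemma no_cycle m i : iter m.+1 (obind (par T)) (Some i) <> Some i.
Proof.
move=> H.
have Ht : forall t, iter (t * m.+1) (obind (par T)) (Some i) = Some i.
  elim=> [|t IHt] //; by rewrite mulSn iterD IHt H.
have := Ht n; rewrite mulnSr iterD par_acyclic iter_none //.
Qed.

Lemma uniq_chain k i : uniq (chain k i).
Proof.
elim: k i => [|k IH] i //=.
case E: (par T i) => [j|] //=; rewrite IH andbT.
apply/negP => /mem_chain [m Hm]; apply: (@no_cycle m i); by rewrite iterSr /= E.
Qed.

Lemma reach_all a i : reach T a i = all a (chain n i).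
Proof. by rewrite /reach reach_chain term_n andbT. Qed.

Lemma depth_size i : depth T i = size (chain n i).
Proof. by rewrite /depth depth_chain. Qed.

Lemma mem_chain_self0 k i : (0 < k)%N -> i \in chain k i.
Proof. case: k => [//|k] _ /=; by rewrite inE eqxx. Qed.
Lemma mem_chain_self i : i \in chain n i.
Proof. apply: mem_chain_self0; by case: i => m /= Hm; apply: leq_ltn_trans Hm. Qed.

Lemma allreach a : [forall i, reach T a i] = [forall i, a i].
Proof.
apply/forallP/forallP => H i.
  by have := H i; rewrite reach_all => /allP; apply; apply: mem_chain_self.
by rewrite reach_all; apply/allP => j _.
Qed.

End Comb.

Section Pr.
Variables (R : realType) (n : nat) (eps : R).

Definition W (a : {ffun 'I_n -> bool}) : R := \prod_i (if a i then 1 - eps else eps).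
Definition Sf (f : {ffun 'I_n -> bool} -> bool) : R := \sum_a W a * (f a)%:R.

Lemma Sf_ext f g : f =1 g -> Sf f = Sf g.
Proof. by move=> H; apply: eq_bigr => a _; rewrite H. Qed.

Lemma Sf_split f g : Sf f = Sf (fun a => f a && g a) + Sf (fun a => f a && ~~ g a).
Proof.
rewrite /Sf -big_split /=; apply: eq_bigr => a _.
by case: (f a); case: (g a) => /=; rewrite ?mulr0 ?mulr1 ?addr0 ?add0r.
Qed.

Lemma Sf_false : Sf (fun _ => false) = 0.
Proof. by rewrite /Sf big1 // => a _; rewrite mulr0. Qed.

Lemma Sf_all (s : seq 'I_n) : uniq s -> Sf (fun a => all a s) = (1 - eps) ^+ size s.
Proof.
move=> Us.
have E : forall a, W a * (all a s)%:R =
   \prod_i ((if a i then 1 - eps else eps) * (if i \in s then (a i)%:R else 1)).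
  move=> a; rewrite big_split /= -big_mkcond /=; congr (_ * _).
  case: (boolP (all a s)) => [/allP H | /allPn [j Hj Ha]].
    by rewrite big1 // => i /H ->.
  by rewrite (bigD1 j) //= (negbTE Ha) mul0r.
rewrite /Sf (eq_bigr _ (fun a _ => E a)).
rewrite -(bigA_distr_bigA (fun i b => (if b then 1 - eps else eps) * (if i \in s then b%:R else 1))) /=.
rewrite (eq_bigr (fun i => if i \in s then 1 - eps else 1)); last first.
  by move=> i _; rewrite big_bool /=; case: (i \in s); rewrite ?mulr1 ?mulr0 ?addr0 // addrNK.
by rewrite -big_mkcond prodr_const /= (card_uniqP Us).
Qed.

Lemma Sf_true : Sf (fun _ => true) = 1.
Proof. by rewrite (@Sf_ext _ (fun a => all a [::])) // Sf_all. Qed.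

Lemma Sf_not f : Sf (fun a => ~~ f a) = 1 - Sf f.
Proof. rewrite -Sf_true (Sf_split (fun _ => true) f) /=. by rewrite addrC addKr. Qed.

Variable T : info_tree n.

Lemma Sf_reach i : Sf (fun a => reach T a i) = (1 - eps) ^+ depth T i.
Proof.
rewrite (@Sf_ext _ (fun a => all a (chain T n i))); last by move=> a; rewrite reach_all.
by rewrite Sf_all ?uniq_chain // depth_size.
Qed.

Lemma Sf_allreach : Sf (fun a => [forall i, reach T a i]) = (1 - eps) ^+ n.
Proof.
rewrite (@Sf_ext _ (fun a => all a (enum 'I_n))); last first.
  move=> a; rewrite allreach; apply/forallP/allP => H i //; by rewrite H ?mem_enum.
by rewrite Sf_all ?enum_uniq // size_enum_ord.
Qed.

End Pr.

Section Dec.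
Variables (R : realType) (n : nat) (rho eps : R) (T : info_tree n).

Definition rf (a : {ffun 'I_n -> bool}) : {ffun 'I_n -> bool} := [ffun i => reach T a i].
Definition f0 : {ffun 'I_n -> bool} := [ffun => false].

Lemma ifR (b : bool) : (if b then 1 else 0) = b%:R :> R.
Proof. by case: b. Qed.

Lemma probT_eq (b : bool) x : probT rho eps T (b, x) =
  if b then rho * \sum_a W eps a * (x == rf a)%:R else (1 - rho) * (x == f0)%:R.
Proof.
rewrite /probT; case: b => /=.
  congr (_ * _); apply: eq_bigr => a _; rewrite ifR /W; congr (_ * (nat_of_bool _)%:R).
  apply/idP/idP => [/forallP H|/eqP ->]; last by apply/forallP => i; rewrite ffunE.
  by apply/eqP/ffunP => i; rewrite ffunE; apply/eqP.
rewrite ifR; congr (_ * (nat_of_bool _)%:R).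
apply/idP/idP => [/forallP H|/eqP ->]; last by apply/forallP => i; rewrite ffunE.
by apply/eqP/ffunP => i; rewrite ffunE; apply/negbTE.
Qed.

Lemma PrT_dec (E : pred (Omega n)) : PrT rho eps T E =
  rho * Sf eps (fun a => E (true, rf a)) + (1 - rho) * (E (false, f0))%:R.
Proof.
rewrite /PrT big_mkcond /=.
rewrite (_ : \sum_(w : Omega n) _ = \sum_(b : bool) \sum_(x : {ffun 'I_n -> bool}) (if E (b, x) then probT rho eps T (b, x) else 0)); last first.
  by rewrite pair_bigA; apply: eq_bigr => -[b x].
rewrite big_bool /=.
congr (_ + _).
  rewrite (eq_bigr (fun x => \sum_a rho * (W eps a * ((x == rf a) && E (true, x))%:R))); last first.
    move=> x _; rewrite probT_eq /= mulr_sumr; case: (E (true, x)).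
      by apply: eq_bigr => a _; rewrite andbT.
    by rewrite big1 // => a _; rewrite andbF mulr0 mulr0.
  rewrite exchange_big /Sf mulr_sumr; apply: eq_bigr => a _.
  rewrite (bigD1 (rf a)) //= eqxx /= big1 ?addr0 // => x /negbTE ->.
  by rewrite mulr0 mulr0.
rewrite (bigD1 f0) //= probT_eq /= eqxx big1 ?addr0; first by case: (E (false, f0)); rewrite ?mulr0.
move=> x /negbTE Hx; rewrite probT_eq /= Hx mulr0; by case: (E _).
Qed.

End Dec.

Section BW.
Variable R : realType.

Lemma bw_FO (p1 q1 p2 q2 : bool -> R) x y :
  p1 true = x -> p1 false = 1 - x -> q1 true = 0 -> q1 false = 1 ->
  p2 true = y -> p2 false = 1 - y -> q2 true = 0 -> q2 false = 1 ->
  0 < x -> 0 <= y ->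
  blackwell_ge p1 q1 p2 q2 <-> y <= x.
Proof.
move=> P1 P0 Q1 Q0 P21 P20 Q21 Q20 x0 y0; split.
  case=> M [M0 M1 Hp Hq].
  have := Hp true; have := Hq true; have := M1 true; have := M0 true false.
  rewrite !big_bool /= P1 P0 Q1 Q0 P21 Q21 => h1 h2 h3 h4.
  have := M0 true true; have := M0 false true. nra.
move=> yx.
have hyx : y / x <= 1 by rewrite ler_pdivrMr // mul1r.
have hyx0 : 0 <= y / x by apply: divr_ge0 => //; apply: ltW.
exists (fun s t => if s then (if t then y / x else 1 - y / x) else (if t then 0 else 1)).
split.
- by move=> [] [] /=; rewrite ?subr_ge0 ?ler01 ?lexx.
- by move=> [] /=; rewrite big_bool /=; ring.
- move=> [] /=; rewrite big_bool /= ?P1 ?P0 ?P21 ?P20; field; by rewrite gt_eqF.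
- move=> [] /=; rewrite big_bool /= ?Q1 ?Q0 ?Q21 ?Q20; ring.
Qed.

Lemma bw_SO (p1 q1 p2 q2 : bool -> R) r1 r2 :
  p1 true = 1 -> p1 false = 0 -> q1 true = r1 -> q1 false = 1 - r1 ->
  p2 true = 1 -> p2 false = 0 -> q2 true = r2 -> q2 false = 1 - r2 ->
  r1 < 1 -> r2 <= 1 ->
  blackwell_ge p1 q1 p2 q2 <-> r1 <= r2.
Proof.
move=> P1 P0 Q1 Q0 P21 P20 Q21 Q20 r1l r2l; split.
  case=> M [M0 M1 Hp Hq].
  have := Hp true; have := Hq true.
  rewrite !big_bool /= P1 P0 Q1 Q0 P21 Q21 => h1 h2.
  have := M0 false true. nra.
move=> r12.
have d0 : 0 < 1 - r1 by rewrite subr_gt0.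
set m := (r2 - r1) / (1 - r1).
have m0 : 0 <= m by apply: divr_ge0; [rewrite subr_ge0 | apply: ltW].
have m1 : m <= 1 by rewrite /m ler_pdivrMr // mul1r; lra.
exists (fun s t => if s then (if t then 1 else 0) else (if t then m else 1 - m)).
split.
- by move=> [] [] /=; rewrite ?subr_ge0 ?ler01 ?lexx.
- by move=> [] /=; rewrite big_bool /=; ring.
- move=> [] /=; rewrite big_bool /= ?P1 ?P0 ?P21 ?P20; ring.
- move=> [] /=; rewrite big_bool /= ?Q1 ?Q0 ?Q21 ?Q20 /m; field; by rewrite gt_eqF.
Qed.

End BW.

Section Exp.
Variables (R : realType) (n : nat) (rho eps : R) (T : info_tree n).
Hypothesis hn : (0 < n)%N.

Let rfE a i : rf T a i = reach T a i.
Proof. by rewrite ffunE. Qed.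

Let Ystar_false : evYstar (false, f0 n) = false.
Proof. apply/negbTE/forallP => H; have := H (Ordinal hn); by rewrite ffunE. Qed.

Let Ystar_true a : evYstar (true, rf T a) = [forall j, reach T a j].
Proof. by apply: eq_forallb => j; rewrite rfE. Qed.

Let c := (1 - eps) ^+ n.
Let q i := (1 - eps) ^+ depth T i.

Lemma Pr_G : PrT rho eps T (@evG n) = rho.
Proof. by rewrite PrT_dec (@Sf_ext _ _ _ _ (fun _ => true)) // Sf_true /= mulr0 addr0 mulr1. Qed.

Lemma Pr_nG : PrT rho eps T (predC (@evG n)) = 1 - rho.
Proof. by rewrite PrT_dec (@Sf_ext _ _ _ _ (fun _ => false)) // Sf_false /= mulr0 add0r mulr1. Qed.

Lemma Pr_sG i s : PrT rho eps T (predI (evSig i s) (@evG n)) =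
  rho * (if s then q i else 1 - q i).
Proof.
rewrite PrT_dec /= andbF mulr0 addr0 /q; congr (_ * _).
case: s => /=.
  rewrite -Sf_reach; apply: Sf_ext => a /=; by rewrite /evSig /= andbT rfE; case: reach.
rewrite -Sf_reach -Sf_not; apply: Sf_ext => a /=; by rewrite /evSig /= andbT rfE; case: reach.
Qed.

Lemma Pr_snG i s : PrT rho eps T (predI (evSig i s) (predC (@evG n))) =
  if s then 0 else 1 - rho.
Proof.
rewrite PrT_dec (@Sf_ext _ _ _ _ (fun _ => false)); last by move=> a /=; rewrite andbF.
rewrite Sf_false mulr0 add0r /= /evSig ffunE; by case: s; rewrite /= ?mulr0 ?mulr1.
Qed.

Lemma Pr_Y : PrT rho eps T (@evYstar n) = rho * c.
Proof.
rewrite PrT_dec Ystar_false mulr0 addr0 (@Sf_ext _ _ _ _ (fun a => [forall j, reach T a j])).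
  by rewrite Sf_allreach.
exact: Ystar_true.
Qed.

Lemma Pr_nY : PrT rho eps T (predC (@evYstar n)) = rho * (1 - c) + (1 - rho).
Proof.
rewrite PrT_dec /= Ystar_false mulr1 (@Sf_ext _ _ _ _ (fun a => ~~ [forall j, reach T a j])).
  by rewrite Sf_not Sf_allreach.
by move=> a; rewrite /= Ystar_true.
Qed.

Let reach_of_all a i : [forall j, reach T a j] -> reach T a i.
Proof. by move/forallP. Qed.

Lemma Pr_sY i s : PrT rho eps T (predI (evSig i s) (@evYstar n)) =
  if s then rho * c else 0.
Proof.
rewrite PrT_dec /= Ystar_false andbF mulr0 addr0 /c.
case: s.
  rewrite -(Sf_allreach eps T); congr (_ * _); apply: Sf_ext => a /=.
  rewrite Ystar_true /evSig rfE; case E: [forall j, _]; rewrite ?andbF ?andbT //.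
  by rewrite reach_of_all.
rewrite (@Sf_ext _ _ _ _ (fun _ => false)) ?Sf_false ?mulr0 // => a /=.
rewrite Ystar_true /evSig rfE; case E: [forall j, _]; rewrite ?andbF ?andbT //.
by rewrite reach_of_all.
Qed.

Lemma Pr_snY i s : PrT rho eps T (predI (evSig i s) (predC (@evYstar n))) =
  if s then rho * (q i - c) else rho * (1 - q i) + (1 - rho).
Proof.
rewrite PrT_dec /= Ystar_false /evSig ffunE.
have HS := Sf_split eps (fun a => reach T a i) (fun a => [forall j, reach T a j]).
rewrite Sf_reach in HS.
rewrite (@Sf_ext _ _ _ _ (fun a => [forall j, reach T a j])) in HS; last first.
  by move=> a /=; case E: [forall j, _]; rewrite ?andbF ?andbT // reach_of_all.
case: s => /=.
  rewrite mulr0 addr0 (@Sf_ext _ _ _ _ (fun a => reach T a i && ~~ [forall j, reach T a j])).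
    rewrite /q /c; rewrite Sf_allreach in HS; rewrite HS; ring.
  by move=> a /=; rewrite rfE Ystar_true; case: reach.
rewrite mulr1 (@Sf_ext _ _ _ _ (fun a => ~~ reach T a i)).
  by rewrite Sf_not Sf_reach.
move=> a /=; rewrite rfE Ystar_true; case E: (reach T a i) => //=.
by apply/negP => /forallP /(_ i); rewrite E.
Qed.

End Exp.

Lemma depth_fuel_le n (T : info_tree n) k i : (depth_fuel T k i <= k)%N.
Proof. elim: k i => [|k IH] i //=; case: (par T i) => [j|] //=; by rewrite ltnS. Qed.

Section Fin.
Variables (R : realType) (n : nat) (rho eps : R).
Hypothesis hn : (0 < n)%N.
Hypothesis hrho : 0 < rho < 1.
Hypothesis heps : 0 < eps < 1.

Let e0 : 0 < 1 - eps. Proof. case/andP: heps => _ h; by rewrite subr_gt0. Qed.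
Let e1 : 1 - eps < 1. Proof. case/andP: heps => h _; lra. Qed.
Let r0 : 0 < rho. Proof. by case/andP: hrho. Qed.
Let r1 : rho < 1. Proof. by case/andP: hrho. Qed.

Let qpos d : 0 < (1 - eps) ^+ d. Proof. exact: exprn_gt0. Qed.
Let qle1 d : (1 - eps) ^+ d <= 1. Proof. apply: exprn_ile1; [exact: ltW | exact: ltW]. Qed.
Let qmono d d' : ((1 - eps) ^+ d <= (1 - eps) ^+ d') = (d' <= d)%N.
Proof. exact: ler_iXn2l. Qed.

Lemma fo_iff (T T' : info_tree n) i j :
  blackwell_ge (experiment rho eps T (@evG n) i).1 (experiment rho eps T (@evG n) i).2
               (experiment rho eps T' (@evG n) j).1 (experiment rho eps T' (@evG n) j).2
  <-> (depth T i <= depth T' j)%N.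
Proof.
have gn : rho != 0 by rewrite gt_eqF.
have gn' : 1 - rho != 0 by rewrite gt_eqF // subr_gt0.
rewrite (@bw_FO _ _ _ _ _ ((1 - eps) ^+ depth T i) ((1 - eps) ^+ depth T' j)) /=.
- by rewrite qmono.
all: rewrite /condPrT ?Pr_sG ?Pr_snG ?Pr_G ?Pr_nG /=; try field => //.
all: rewrite ?mul0r ?divff //; try exact: ltW.
Qed.

Let c := (1 - eps) ^+ n.
Let D := rho * (1 - c) + (1 - rho).
Let D0 : 0 < D. Proof. rewrite /D; have := qle1 n; have := qpos n; rewrite -/c; have := r0; have := r1; nra. Qed.
Let cq (T : info_tree n) i : c <= (1 - eps) ^+ depth T i.
Proof. by rewrite /c qmono /depth depth_fuel_le. Qed.

Let rr (T : info_tree n) i := rho * ((1 - eps) ^+ depth T i - c) / D.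

Let rr_lt1 T i : rr T i < 1.
Proof.
rewrite /rr ltr_pdivrMr // mul1r /D; have := qle1 (depth T i); have := r0; have := r1; have := qpos n; rewrite -/c; nra.
Qed.

Let rr_mono T T' i j : (rr T i <= rr T' j) = (depth T' j <= depth T i)%N.
Proof.
rewrite /rr ler_pM2r ?invr_gt0 // ler_pM2l // lerD2r; exact: qmono.
Qed.

Lemma so_iff (T' T : info_tree n) i j :
  blackwell_ge (experiment rho eps T' (@evYstar n) i).1 (experiment rho eps T' (@evYstar n) i).2
               (experiment rho eps T (@evYstar n) j).1 (experiment rho eps T (@evYstar n) j).2
  <-> (depth T j <= depth T' i)%N.
Proof.
have cn : rho * c != 0 by rewrite mulf_neq0 ?gt_eqF ?qpos.
have Dn : D != 0 by rewrite gt_eqF.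
rewrite (@bw_SO _ _ _ _ _ (rr T' i) (rr T j)) /=.
- by rewrite rr_mono.
all: rewrite /condPrT ?Pr_sY ?Pr_snY ?Pr_Y ?Pr_nY //= -/c -/D /rr ?mul0r ?divff //.
all: try (rewrite /D; field; exact: Dn).
exact: ltW (rr_lt1 T j).
Qed.

End Fin.
End Aux.
Import Aux.

Theorem proposition4 (R : realType) (I : nat) (rho eps : R)
    (T T' : info_tree I) :
  (2 <= I)%N -> 0 < rho < 1 -> 0 < eps < 1 ->
  (ge_dif T T' <-> ge_FO rho eps T T') /\
  (ge_FO rho eps T T' <-> ge_SO rho eps T' T).
Proof.
move=> hI hrho heps.
have hn : (0 < I)%N by apply: leq_trans hI.
split.
  split => -[pi H]; exists pi => i.
    by apply/(fo_iff hrho heps); apply: H.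
  by apply/(fo_iff hrho heps); apply: H.
split => -[pi H]; exists pi^-1%g => i.
  apply/(so_iff hn hrho heps); have := H (pi^-1%g i); move/(fo_iff hrho heps); by rewrite permKV.
apply/(fo_iff hrho heps); have := H (pi^-1%g i); move/(so_iff hn hrho heps); by rewrite permKV.
Qed.
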